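(* Let $n\ge3$ and $L\cong\mathbf{2}^n$ be a Boolean lattice. Then the strong metric dimension of its zero-divisor graph is $\mathrm{sdim}_M(G(L))=2^n-2n$.
   Context: The zero-divisor graph $G(L)$ of a lattice $L$ with $0$ has as vertices the nonzero $a\in L$ such that $a\wedge b=0$ for some nonzero $b$, with distinct vertices adjacent iff their meet is $0$. In a connected graph $G$, $w$ strongly resolves $u,v$ if some shortest $u$–$w$ path contains $v$ or some shortest $v$–$w$ path contains $u$; $\mathrm{sdim}_M(G)$ is the minimum size of a set $W$ of vertices such that every pair of vertices is strongly resolved by some vertex of $W$. *)

(* Defs.v *)
From HB Require Import structures.
From mathcomp Require Import all_boot all_order.
Set Implicit Arguments.
Unset Strict Implicit.
Unset Printing Implicit Defensive.
Import Order.Theory.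

Section Graphs.
Variable T : finType.

(* A finite simple graph is given by a vertex set V : {set T} and a
   symmetric irreflexive adjacency relation e (only used on V). *)

Definition walk (V : {set T}) (e : rel T) (u w : T) (p : seq T) : bool :=
  [&& path e u p, last u p == w & all (fun x => x \in V) (u :: p)].

Definition shortest_path (V : {set T}) (e : rel T) (u w : T) (p : seq T) : Prop :=
  walk V e u w p /\ forall q, walk V e u w q -> size p <= size q.

Definition strongly_resolves (V : {set T}) (e : rel T) (w u v : T) : Prop :=
  (exists p, shortest_path V e u w p /\ v \in u :: p) \/
  (exists p, shortest_path V e v w p /\ u \in v :: p).

Definition strong_resolving_set (V : {set T}) (e : rel T) (W : {set T}) : Prop :=
  W \subset V /\
  forall u v, u \in V -> v \in V -> u != v ->
    exists2 w, w \in W & strongly_resolves V e w u v.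

Definition is_sdim (V : {set T}) (e : rel T) (k : nat) : Prop :=
  (exists W, strong_resolving_set V e W /\ #|W| = k) /\
  (forall W, strong_resolving_set V e W -> k <= #|W|).

End Graphs.

Section ZeroDivisorGraph.
Context {d : Order.disp_t} (L : finTBLatticeType d).
Local Open Scope order_scope.

Definition zdg_vertices : {set L} :=
  [set a : L | (a != \bot) && [exists b : L, (b != \bot) && (a `&` b == \bot)]].

Definition zdg_adj : rel L := fun a b => (a != b) && (a `&` b == \bot).

End ZeroDivisorGraph.

Arguments zdg_vertices {d} L.
Arguments zdg_adj {d} L.

(* Main.v *)
Require Import Defs.
From mathcomp Require Import all_boot all_order zify.
From Stdlib Require Import Classical.
Set Implicit Arguments. Unset Strict Implicit. Unset Printing Implicit Defensive.
Import Order.Theory.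
Definition lam (T : finType) (LL : {set {set T}}) :=
  forall A B, A \in LL -> B \in LL -> A :&: B != set0 -> (A \subset B) || (B \subset A).

Lemma setD1_notin (T : finType) (x : T) (A : {set T}) : x \notin A -> A :\ x = A.
Proof. move=> hx; apply/setP => y; rewrite !inE; case: eqP => // ->; by rewrite (negbTE hx). Qed.

Lemma lam_aux (T : finType) (LL : {set {set T}}) x (A1 A2 Y1 Y2 : {set T}) :
  lam LL -> A1 \in LL -> A2 \in LL -> Y1 \in LL -> Y2 \in LL ->
  x \in A1 -> x \in A2 -> x \notin Y1 -> x \notin Y2 -> Y1 = A1 :\ x -> Y2 = A2 :\ x ->
  Y1 != set0 -> A1 \subset A2 -> Y1 = Y2.
Proof.
move=> hl h1 h2 h3 h4 x1 x2 y1 y2 e1 e2 ne s12.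
have sY : Y1 \subset Y2 by rewrite e1 e2 setSD.
have : Y2 :&: A1 != set0.
  case/set0Pn: ne => z zY; apply/set0Pn; exists z; rewrite inE (subsetP sY _ zY).
  by move: zY; rewrite e1 !inE => /andP[].
case/(hl _ _ h4 h1)/orP => s.
- apply/eqP; rewrite eqEsubset sY /= e1; apply/subsetP => z zY.
  rewrite !inE (subsetP s _ zY) andbT; apply/eqP => ezx; by rewrite -ezx zY in y2.
- by rewrite (subsetP s _ x1) in y2.
Qed.

Lemma laminar_bound (T : finType) (m : nat) : forall (S : {set T}) (LL : {set {set T}}),
  #|S| = m -> (forall A, A \in LL -> (A != set0) && (A \subset S)) -> lam LL ->
  #|LL| <= (2 * m).-1.
Proof.
elim: m => [|m IH] S LL hS hL hlam.
  rewrite leqn0 cards_eq0; apply/eqP/setP => A; rewrite inE; apply/negbTE/negP => /hL.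
  by rewrite (cards0_eq hS) subset0 => /andP[/negbTE ->].
have [x xS] : exists x, x \in S by apply/set0Pn; rewrite -card_gt0 hS.
set S' := S :\ x.
have hS' : #|S'| = m by move: hS; rewrite (cardsD1 x) xS => -[].
set LL' := [set A :\ x | A in LL] :\ set0.
have hL' : forall A, A \in LL' -> (A != set0) && (A \subset S').
  move=> A; rewrite !inE => /andP[-> /imsetP[B BL ->]] /=.
  by rewrite setSD //; case/andP: (hL _ BL).
have hlam' : lam LL'.
  move=> A B; rewrite !inE => /andP[_ /imsetP[A0 A0L ->]] /andP[_ /imsetP[B0 B0L ->]] ne.
  have : A0 :&: B0 != set0.
    case/set0Pn: ne => z; rewrite !inE => /andP[/andP[_ z1] /andP[_ z2]].
    by apply/set0Pn; exists z; rewrite inE z1 z2.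
  by case/(hlam _ _ A0L B0L)/orP => s; rewrite (setSD _ s) ?orbT.
have IH' := IH _ _ hS' hL' hlam'.
destruct m as [|m].
  have eS : S = [set x].
    apply/eqP; rewrite eq_sym eqEcard hS cards1 andbT sub1set //.
  have : LL \subset [set [set x]].
    apply/subsetP => A AL; rewrite inE; case/andP: (hL _ AL); rewrite eS => ne sub.
    by rewrite eqEcard sub cards1 card_gt0.
  by move/subset_leq_card; rewrite cards1.
set C := LL :&: [set A : {set T} | x \in A].
set N := LL :\: [set A : {set T} | x \in A].
set D := [set A :\ x | A in C].
have eLL : #|LL| = #|C| + #|N| by rewrite cardsID.
have eD : #|D| = #|C|.
  apply: card_in_imset => A B; rewrite !inE => /andP[_ xA] /andP[_ xB] e.
  by rewrite -(setD1K xA) -(setD1K xB) e.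
have sN : N \subset LL'.
  apply/subsetP => A; rewrite !inE => /andP[xA AL].
  case/andP: (hL _ AL) => -> _ /=; apply/imsetP; exists A => //.
  by rewrite setD1_notin.
have sD : D :\ set0 \subset LL'.
  apply/subsetP => A; rewrite !inE => /andP[-> /imsetP[B]]; rewrite !inE => /andP[BL _] ->.
  by apply/imset_f.
have hND : #|N :&: D| <= 1.
  apply/card_le1_eqP => Y1 Y2; rewrite !inE.
  move=> /andP[/andP[y1 Y1L] /imsetP[A1]]; rewrite !inE => /andP[A1L x1] e1.
  move=> /andP[/andP[y2 Y2L] /imsetP[A2]]; rewrite !inE => /andP[A2L x2] e2.
  have ne1 : Y1 != set0 by case/andP: (hL _ Y1L).
  have ne2 : Y2 != set0 by case/andP: (hL _ Y2L).
  have : A1 :&: A2 != set0 by apply/set0Pn; exists x; rewrite inE x1 x2.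
  case/(hlam _ _ A1L A2L)/orP => s.
  - by apply/esym; exact: (lam_aux hlam A1L A2L Y1L Y2L x1 x2 y1 y2 e1 e2 ne1 s).
  - exact: (lam_aux hlam A2L A1L Y2L Y1L x2 x1 y2 y1 e2 e1 ne2 s).
have h1 := cardsUI N (D :\ set0).
have h2 : #|N :&: (D :\ set0)| <= 1.
  apply: leq_trans hND; apply: subset_leq_card; apply/setIS/subD1set.
have h3 : #|N :|: (D :\ set0)| <= #|LL'| by apply: subset_leq_card; rewrite subUset sN sD.
have h4 := cardsD1 set0 D.
have h5 : (set0 \in D) <= 1 by case: (set0 \in D).
rewrite eLL -eD h4 -addnA [#|D :\ set0| + _]addnC -h1. apply: (leq_trans (leq_add (leq_b1 _) (leq_add (leq_trans h3 IH') h2))). rewrite !mulnS /=. lia.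
Qed.


Lemma setC_eq0' (T : finType) (X : {set T}) : (~: X == set0) = (X == setT).
Proof. by apply/eqP/eqP => h; [rewrite -[X]setCK h setC0 | rewrite h setCT]. Qed.
Lemma setC_eqT' (T : finType) (X : {set T}) : (~: X == setT) = (X == set0).
Proof. by apply/eqP/eqP => h; [rewrite -[X]setCK h setCT | rewrite h setC0]. Qed.
Lemma setICl' (T : finType) (X : {set T}) : ~: X :&: X = set0.
Proof. by rewrite setIC setICr. Qed.

Section Main.
Variables (n : nat) (d : Order.disp_t) (L : finTBLatticeType d) (f : L -> {set 'I_n}).
Hypotheses (n3 : 3 <= n) (fbij : bijective f)
  (fmono : forall x y : L, (x <= y)%O = (f x \subset f y)).

Let V := zdg_vertices L.
Let E := zdg_adj L.

Lemma finj : injective f. Proof. exact: bij_inj. Qed.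
Lemma fsurj X : exists x, f x = X.
Proof. case: fbij => g fg gf; by exists (g X). Qed.

Lemma f0 : f (\bot)%O = set0.
Proof.
have [z fz] := fsurj set0; apply/eqP; rewrite -subset0 -fz -fmono; exact: le0x.
Qed.

Lemma fT : f (\top)%O = setT.
Proof.
have [z fz] := fsurj setT; apply/eqP; rewrite eqEsubset subsetT /= -fz -fmono; exact: lex1.
Qed.

Lemma fI x y : f (x `&` y)%O = f x :&: f y.
Proof.
have [z fz] := fsurj (f x :&: f y).
suff -> : (x `&` y)%O = z by [].
apply: le_anti; apply/andP; split.
- by rewrite fmono fz subsetI -!fmono leIl leIr.
- by rewrite lexI !fmono fz subsetIl subsetIr.
Qed.

Lemma inV x : (x \in V) = (f x != set0) && (f x != setT).
Proof.
rewrite /V /zdg_vertices inE -f0 (inj_eq finj); congr (_ && _).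
apply/existsP/idP.
- case=> b /andP[bn /eqP e]; apply/eqP => ex.
  have fb : f b = f (\bot)%O by rewrite f0 -[f b]setTI -ex -fI e f0.
  by rewrite (finj fb) eqxx in bn.
- move=> hx; have [b fb] := fsurj (~: f x); exists b.
  apply/andP; split; last by apply/eqP/finj; rewrite fI fb f0 setICr.
  apply/negP => /eqP eb; move: fb; rewrite eb f0 => /(congr1 (fun X => ~: X)).
  by rewrite setCK setC0 => e; rewrite e eqxx in hx.
Qed.

Lemma adjE x y : E x y = (x != y) && (f x :&: f y == set0).
Proof. by rewrite /E /zdg_adj -f0 -fI (inj_eq finj). Qed.

Lemma adj_of x y : x \in V -> f x :&: f y = set0 -> E x y.
Proof.
move=> xV e; rewrite adjE e eqxx andbT; apply/eqP => exy.
by move: e xV; rewrite exy setIid inV => ->; rewrite eqxx.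
Qed.

Lemma ex_vert X : X != set0 -> X != setT -> exists2 x, x \in V & f x = X.
Proof. move=> h0 hT; have [x fx] := fsurj X; exists x => //; by rewrite inV fx h0 hT. Qed.

Lemma walk_inV u w p : walk V E u w p -> (u \in V) /\ (w \in V).
Proof.
case/and3P => _ /eqP <- a; split; first by case/andP: a.
exact: (allP a _ (mem_last u p)).
Qed.

Lemma walk_ge2 u w p : walk V E u w p -> u != w -> f u :&: f w != set0 -> 2 <= size p.
Proof.
case: p => [|a [|b q]] //.
- by rewrite /walk => /and3P[_ /eqP /= -> _]; rewrite eqxx.
- rewrite /walk /= andbT => /and3P[h /eqP <- _] _; rewrite adjE in h.
  by case/andP: h => _ ->.
Qed.

Lemma walk_ge3 u w p : walk V E u w p -> f u :&: f w != set0 -> f u :|: f w = setT ->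
  3 <= size p.
Proof.
move=> hw; have [uV wV] := walk_inV hw; move: hw.
case: p => [|a [|b [|c q]]] //.
- rewrite /walk => /and3P[_ /eqP /= <- _] _; rewrite setUid => e.
  by move: uV; rewrite inV e eqxx andbF.
- rewrite /walk /= andbT => /and3P[h /eqP <- _]; rewrite adjE in h.
  by case/andP: h => _ ->.
- rewrite /walk /= andbT => /and3P[/andP[h1 h2] /eqP eb /and3P[_ aV _]] _ hT.
  rewrite -eb in hT.
  rewrite adjE in h1; rewrite adjE in h2.
  case/andP: h1 => _ /eqP h1; case/andP: h2 => _ /eqP h2.
  have : f a \subset ~: (f u :|: f b).
    apply/subsetP => z za; rewrite !inE negb_or; apply/andP; split; apply/negP => zz.
    + have : z \in f u :&: f a by rewrite inE zz za.
      by rewrite h1 inE.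
    + have : z \in f a :&: f b by rewrite inE zz za.
      by rewrite h2 inE.
  by rewrite hT setCT subset0 => e; move: aV; rewrite inV e.
Qed.

Lemma walk_cat u y w q r : walk V E u y q -> walk V E y w r -> walk V E u w (q ++ r).
Proof.
move=> /and3P[pq /eqP lq aq] /and3P[pr /eqP lr ar].
move: aq ar => /= /andP[uV aq] /andP[_ ar].
by rewrite /walk cat_path lq pq pr last_cat lq lr eqxx /= all_cat uV aq ar.
Qed.

Lemma walk_split u w q r : walk V E u w (q ++ r) ->
  walk V E u (last u q) q /\ walk V E (last u q) w r.
Proof.
rewrite /walk cat_path last_cat -cat_cons all_cat => /and3P[/andP[pq pr] lr /andP[aq ar]].
split; apply/and3P; split => //; rewrite /= ar andbT.
exact: (allP aq _ (mem_last u q)).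
Qed.

Lemma shortest_prefix u w q r : shortest_path V E u w (q ++ r) ->
  shortest_path V E u (last u q) q.
Proof.
case=> hw hmin; have [wq wr] := walk_split hw; split => // q' hq'.
by have := hmin _ (walk_cat hq' wr); rewrite !size_cat leq_add2r.
Qed.

Lemma ex_shortest u w p : walk V E u w p -> exists q, shortest_path V E u w q.
Proof.
suff : forall k p, size p <= k -> walk V E u w p -> exists q, shortest_path V E u w q.
  by move=> h; apply: (h (size p)).
elim=> [|k IH] p' hp hw.
  by exists p'; split => // q _; apply: leq_trans hp _.
destruct (classic (forall q, walk V E u w q -> size p' <= size q)) as [h|h].
  by exists p'; split.
apply not_all_ex_not in h; case: h => q hq.
apply imply_to_and in hq; case: hq => wq hq.
apply: (IH q) => //.
have : size q < size p' by rewrite ltnNge; apply/negP.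
move=> lt; rewrite -ltnS; exact: leq_trans lt hp.
Qed.

Lemma walk2 u y : u \in V -> y \in V -> f u :|: f y != setT ->
  exists q, walk V E u y q /\ size q <= 2.
Proof.
move=> uV yV hT.
case: (eqVneq u y) => [<-|neq]; first by exists [::]; rewrite /walk /= eqxx uV.
case: (eqVneq (f u :&: f y) set0) => hd.
  by exists [:: y]; rewrite /walk /= adj_of // eqxx uV yV.
have [c cV fc] : exists2 c, c \in V & f c = ~: (f u :|: f y).
  apply: ex_vert; rewrite ?setC_eq0' ?setC_eqT' //.
  apply/negP => /eqP h; move: uV; rewrite inV.
  have : f u \subset f u :|: f y by rewrite subsetUl.
  by rewrite h subset0 => ->.
exists [:: c; y]; split => //.
rewrite /walk /= eqxx uV cV yV !andbT adj_of ?adj_of //.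
- by rewrite fc; apply/setP => z; rewrite !inE; case: (z \in f u); case: (z \in f y).
- by rewrite fc; apply/setP => z; rewrite !inE; case: (z \in f u); case: (z \in f y).
Qed.

Lemma walk3 u y : u \in V -> y \in V -> exists q, walk V E u y q /\ size q <= 3.
Proof.
move=> uV yV.
case: (eqVneq (f u :|: f y) setT) => hT; last first.
  by have [q [hq sq]] := walk2 uV yV hT; exists q; split => //; apply: leq_trans sq _.
have [a aV fa] : exists2 a, a \in V & f a = ~: f u.
  by apply: ex_vert; rewrite ?setC_eq0' ?setC_eqT'; move: uV; rewrite inV => /andP[].
have [b bV fb] : exists2 b, b \in V & f b = ~: f y.
  by apply: ex_vert; rewrite ?setC_eq0' ?setC_eqT'; move: yV; rewrite inV => /andP[].
exists [:: a; b; y]; split => //.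
rewrite /walk /= eqxx uV aV bV yV !andbT !adj_of //.
- by rewrite fb setICl'.
- by rewrite fa fb -setCU hT setCT.
- by rewrite fa setICr.
Qed.

Lemma no_geo u v w p : u \in V -> v \in V -> u != v -> f u :&: f v != set0 ->
  ~~ (f v \subset f u) -> shortest_path V E u w p -> v \in u :: p -> w = v.
Proof.
move=> uV vV neq hI hS sp; rewrite in_cons eq_sym (negbTE neq) /= => vp.
apply/eqP/negPn/negP => nwv.
case/splitPr: vp sp => p1 p2 sp.
case: p2 sp => [|y p3] sp.
  case: sp => /and3P[_ /eqP l _] _; rewrite last_cat /= in l.
  by rewrite l eqxx in nwv.
have sq : shortest_path V E u y (p1 ++ [:: v; y]).
  have := @shortest_prefix u w (p1 ++ [:: v; y]) p3; rewrite -catA last_cat /=.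
  by apply.
have wv : walk V E u v (p1 ++ [:: v]).
  have := @walk_split u w (p1 ++ [:: v]) (y :: p3); rewrite -catA last_cat /=.
  by case/(_ sp.1).
have hvy : E v y.
  have := @walk_split u y (p1 ++ [:: v]) [:: y]; rewrite -catA last_cat /=.
  by case/(_ sq.1) => _ /and3P[/= /andP[]].
have yV : y \in V by case: (walk_inV sq.1).
have hv2 := walk_ge2 wv neq hI.
case: sq => _ hmin.
case: (eqVneq (f u :|: f v) setT) => hT.
  have hv3 := walk_ge3 wv hI hT.
  have [q [hq sq]] := walk3 uV yV.
  have := leq_trans (hmin _ hq) sq; rewrite size_cat /=.
  by move: hv3; rewrite size_cat /=; lia.
have hT' : f u :|: f y != setT.
  apply/negP => /eqP hT'; move: hS; apply/negP/negPn; apply/subsetP => z zv.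
  move: hvy; rewrite adjE => /andP[_ /eqP dis].
  have : z \in f u :|: f y by rewrite hT' inE.
  rewrite inE => /orP[] // zy.
  have : z \in f v :&: f y by rewrite inE zv zy.
  by rewrite dis inE.
have [q [hq sq]] := walk2 uV yV hT'.
have := leq_trans (hmin _ hq) sq; rewrite size_cat /=.
by move: hv2; rewrite size_cat /=; lia.
Qed.

Lemma disj_mem (A B : {set 'I_n}) z : A :&: B = set0 -> z \in A -> z \in B -> False.
Proof. move=> h za zb; have : z \in A :&: B by rewrite inE za zb. by rewrite h inE. Qed.

Lemma geo2 a b w : a \in V -> b \in V -> w \in V -> f a :&: f b = set0 ->
  f b :&: f w = set0 -> a != w -> f a :&: f w != set0 -> shortest_path V E a w [:: b; w].
Proof.
move=> aV bV wV h1 h2 ne hI; split.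
  by rewrite /walk /= aV bV wV eqxx !andbT !adj_of.
move=> q hq; exact: walk_ge2 hq ne hI.
Qed.

Lemma geo3 a b c w : a \in V -> b \in V -> c \in V -> w \in V -> f a :&: f b = set0 ->
  f b :&: f c = set0 -> f c :&: f w = set0 -> f a :&: f w != set0 ->
  f a :|: f w = setT -> shortest_path V E a w [:: b; c; w].
Proof.
move=> aV bV cV wV h1 h2 h3 hI hT; split.
  by rewrite /walk /= aV bV cV wV eqxx !andbT !adj_of.
move=> q hq; exact: walk_ge3 hq hI hT.
Qed.

Lemma tpl : n.-1 < n. Proof. lia. Qed.
Lemma o0l : 0 < n. Proof. lia. Qed.
Lemma o1l : 1 < n. Proof. lia. Qed.
Definition tp : 'I_n := Ordinal tpl.
Definition o0 : 'I_n := Ordinal o0l.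
Definition o1 : 'I_n := Ordinal o1l.
Definition pk (k : 'I_n) : {set 'I_n} := [set j : 'I_n | j < k].
Definition S1 : {set {set 'I_n}} := [set [set i] | i : 'I_n].
Definition PP : {set {set 'I_n}} := [set pk k | k in [set k : 'I_n | 2 <= k]].
Definition FF : {set {set 'I_n}} := S1 :|: PP.

Lemma tp_pk k : tp \notin pk k.
Proof. rewrite inE /= -leqNgt; have := ltn_ord k; lia. Qed.

Lemma FF_V A : A \in FF -> (A != set0) && (A != setT).
Proof.
rewrite inE => /orP[/imsetP[i _ ->]|/imsetP[k]].
  apply/andP; split; first by apply/set0Pn; exists i; rewrite inE.
  apply/negP => /eqP h; have := cards1 i; rewrite h cardsT card_ord; lia.
rewrite inE => hk ->; apply/andP; split.
  by apply/set0Pn; exists o0; rewrite inE /=; lia.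
by apply/negP => /eqP h; have := tp_pk k; rewrite h inE.
Qed.

Lemma FF1 A : A \in FF -> #|A| != 1 -> tp \notin A.
Proof.
rewrite inE => /orP[/imsetP[i _ ->]|/imsetP[k _ ->]] h; last exact: tp_pk.
by rewrite cards1 eqxx in h.
Qed.

Lemma FF2 A B : A \in FF -> B \in FF -> A :&: B != set0 -> (A \subset B) || (B \subset A).
Proof.
rewrite !inE => /orP[/imsetP[i _ ->]|/imsetP[k _ ->]].
  move=> _ /set0Pn[z]; rewrite !inE => /andP[/eqP -> zB].
  by rewrite sub1set zB.
move=> /orP[/imsetP[j _ ->]|/imsetP[k' _ ->]].
  move=> /set0Pn[z]; rewrite !inE => /andP[zA /eqP ez].
  by rewrite sub1set -ez inE zA orbT.
move=> _; case: (leqP k k') => h.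
  apply/orP; left; apply/subsetP => z; rewrite !inE => hz; exact: leq_trans hz h.
apply/orP; right; apply/subsetP => z; rewrite !inE => hz; exact: ltn_trans hz h.
Qed.

Lemma card_FF : #|FF| = 2 * n - 2.
Proof.
have c1 : #|S1| = n by rewrite card_imset ?card_ord //; exact: set1_inj.
have c2 : #|PP| = n - 2.
  rewrite card_in_imset; last first.
    move=> k1 k2 _ _ e; apply/val_inj/eqP; rewrite eqn_leq; apply/andP; split;
      rewrite leqNgt; apply/negP => lt.
    - have : k2 \in pk k1 by rewrite inE.
      by rewrite e inE ltnn.
    - have : k1 \in pk k2 by rewrite inE.
      by rewrite -e inE ltnn.
  have e : ~: [set k : 'I_n | 2 <= k] = [set o0; o1].
    apply/setP => z; rewrite !inE -!val_eqE /=; case: z => [[|[|m]] ?] //=.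
  have := cardsC [set k : 'I_n | 2 <= k]; rewrite e cards2 card_ord.
  have -> : (o0 != o1) by rewrite -val_eqE.
  lia.
have c3 : S1 :&: PP = set0.
  apply/eqP; rewrite -subset0; apply/subsetP => A; rewrite inE.
  move=> /andP[/imsetP[i _ ->] /imsetP[k]]; rewrite inE => hk e.
  have h0 : o0 \in [set i] by rewrite e inE /=; lia.
  have h1 : o1 \in [set i] by rewrite e inE /=; lia.
  by move: h0 h1; rewrite !inE => /eqP <- /eqP/(congr1 val).
have := cardsUI S1 PP; rewrite c1 c2 c3 cards0 -/FF; lia.
Qed.

Definition FL : {set L} := [set x : L | f x \in FF].
Definition WW : {set L} := V :\: FL.

Lemma card_V : #|V| = 2 ^ n - 2.
Proof.
have e : f @: V = ~: [set set0; setT].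
  apply/setP => X; rewrite !inE negb_or; apply/imsetP/idP.
    by case=> x xV ->; move: xV; rewrite inV.
  move=> h; have [x fx] := fsurj X; exists x => //; by rewrite inV fx.
rewrite -(card_imset _ finj) e.
have := cardsC [set (set0 : {set 'I_n}); setT].
rewrite cards2 -cardsT -powersetT card_powerset cardsT card_ord.
have -> : (set0 : {set 'I_n}) != setT.
  by apply/negP => /eqP h; have := in_setT o0; rewrite -h inE.
lia.
Qed.

Lemma FL_sub : FL \subset V.
Proof. apply/subsetP => x; rewrite inE inV; exact: FF_V. Qed.

Lemma card_FL : #|FL| = #|FF|.
Proof.
rewrite -(card_imset _ finj); suff -> : f @: FL = FF by []. apply/setP => X; apply/imsetP/idP.
  by case=> x; rewrite inE => h ->.
move=> h; have [x fx] := fsurj X; exists x => //; by rewrite inE fx.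
Qed.

Lemma card_WW : #|WW| = 2 ^ n - 2 * n.
Proof.
rewrite /WW cardsD (setIidPr FL_sub) card_V card_FL card_FF.
have : 2 <= 2 ^ n by rewrite (leq_exp2l 1) //; lia.
lia.
Qed.

Definition Res u v := exists2 w, w \in WW & strongly_resolves V E w u v.

Lemma resolves_sym w u v : strongly_resolves V E w u v -> strongly_resolves V E w v u.
Proof. by case=> h; [right|left]. Qed.

Lemma Res_sym u v : Res u v -> Res v u.
Proof. by case=> w wW h; exists w => //; apply: resolves_sym. Qed.

Lemma res_trivial u v : u \in V -> v \in V -> strongly_resolves V E u u v.
Proof.
move=> uV vV; have [q [wq _]] := walk3 vV uV; have [p sp] := ex_shortest wq.
right; exists p; split => //; case: sp => /and3P[_ /eqP <- _] _; exact: mem_last.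
Qed.

Lemma notFF (X : {set 'I_n}) : tp \in X -> #|X| != 1 -> X \notin FF.
Proof. by move=> h1 h2; apply/negP => /FF1 /(_ h2); rewrite h1. Qed.

Lemma card_ne1 (X : {set 'I_n}) a b : a \in X -> b \in X -> a != b -> #|X| != 1.
Proof.
move=> ha hb ne; apply/negP => /cards1P[c ec]; move: ha hb ne; rewrite ec !inE.
by move=> /eqP -> /eqP ->; rewrite eqxx.
Qed.

Lemma inWW w : w \in V -> f w \notin FF -> w \in WW.
Proof. by move=> wV h; rewrite /WW in_setD wV andbT /FL inE h. Qed.

Lemma res_opt2 u v : u \in V -> v \in V -> f v \in FF -> f u :&: f v = set0 ->
  #|f v| != 1 -> Res u v.
Proof.
move=> uV vV vF hd c1.
have tv := FF1 vF c1.
have [v0 v1] : (f v != set0) /\ (f v != setT) by move: vV; rewrite inV => /andP.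
have [x0 x0v] := set0Pn _ v0.
have ne : f v :\ x0 != set0.
  rewrite -card_gt0; have := cardsD1 x0 (f v); rewrite x0v.
  have : 0 < #|f v| by rewrite card_gt0.
  move: c1; lia.
have [y yv] := set0Pn _ ne.
have [c cV fc] : exists2 c, c \in V & f c = f v :\ x0.
  apply: ex_vert => //; apply/negP => /eqP h.
  have : tp \in f v :\ x0 by rewrite h inE.
  by rewrite inE (negbTE tv) andbF.
have tx : tp != x0 by apply/negP => /eqP e; rewrite e x0v in tv.
have [w wV fw] : exists2 w, w \in V & f w = ~: f v :|: [set x0].
  apply: ex_vert.
    by apply/set0Pn; exists x0; rewrite !inE eqxx orbT.
  apply/negP => /eqP h; have : y \in ~: f v :|: [set x0] by rewrite h inE.
  by move: yv; rewrite !inE => /andP[/negbTE -> ->].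
exists w.
  apply: inWW => //; rewrite fw; apply: notFF.
    by rewrite !inE tv.
  by apply: (@card_ne1 _ tp x0) => //; rewrite !inE ?tv ?eqxx ?orbT.
right; exists [:: u; c; w]; split; last by rewrite !in_cons eqxx !orbT.
apply: geo3 => //.
- by rewrite setIC.
- apply/eqP; rewrite -subset0; apply/subsetP => z; rewrite fc !inE => /and3P[zu _ zv].
  by case: (disj_mem hd zu zv).
- rewrite fc fw; apply/eqP; rewrite -subset0; apply/subsetP => z; rewrite !inE.
  by case: (z \in f v); case: (z == x0).
- by apply/set0Pn; exists x0; rewrite fw !inE x0v eqxx orbT.
- by rewrite fw; apply/setP => z; rewrite !inE; case: (z \in f v); case: (z == x0).
Qed.

Lemma res_opt1 u v : u \in V -> v \in V -> f u \in FF -> f u :&: f v = set0 ->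
  #|f v| = 1 -> tp \notin f v -> Res u v.
Proof.
move=> uV vV uF hd c1 tv.
have [w wV fw] : exists2 w, w \in V & f w = ~: f v.
  by apply: ex_vert; rewrite ?setC_eq0' ?setC_eqT'; move: vV; rewrite inV => /andP[].
have wF : f w \notin FF.
  rewrite fw; apply: notFF; first by rewrite inE tv.
  have := cardsC (f v); rewrite c1 card_ord; lia.
exists w; first exact: inWW.
left; exists [:: v; w]; split; last by rewrite !in_cons eqxx !orbT.
apply: geo2 => //.
- by rewrite fw setICr.
- by apply/negP => /eqP e; rewrite -e uF in wF.
- have [a au] : exists a, a \in f u by apply/set0Pn; move: uV; rewrite inV => /andP[].
  apply/set0Pn; exists a; rewrite fw !inE au /=; apply/negP => av.
  exact: (disj_mem hd au av).
Qed.

Lemma res_opt3 u v : u \in V -> v \in V -> f u \in FF -> f v \in FF -> u != v ->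
  f u \subset f v -> Res u v.
Proof.
move=> uV vV uF vF neq s.
have [x xv xu] : exists2 x, x \in f v & x \notin f u.
  case: (boolP (f v \subset f u)) => h.
    have e : f u = f v by apply/eqP; rewrite eqEsubset s h.
    by rewrite (finj e) eqxx in neq.
  by move/subsetPn: h.
have [y yu] : exists y, y \in f u by apply/set0Pn; move: uV; rewrite inV => /andP[].
have c1 : #|f v| != 1.
  apply: (@card_ne1 _ x y) => //; first exact: (subsetP s).
  by apply/negP => /eqP e; rewrite e yu in xu.
have tv := FF1 vF c1.
have tu : tp \notin f u by apply/negP => /(subsetP s); rewrite (negbTE tv).
have [c cV fc] : exists2 c, c \in V & f c = ~: f v.
  by apply: ex_vert; rewrite ?setC_eq0' ?setC_eqT'; move: vV; rewrite inV => /andP[].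
have [w wV fw] : exists2 w, w \in V & f w = ~: f u.
  by apply: ex_vert; rewrite ?setC_eq0' ?setC_eqT'; move: uV; rewrite inV => /andP[].
exists w.
  apply: inWW => //; rewrite fw; apply: notFF; first by rewrite inE tu.
  apply: (@card_ne1 _ tp x); rewrite ?inE ?tu //.
  by apply/negP => /eqP e; rewrite e xv in tv.
right; exists [:: c; u; w]; split; last by rewrite !in_cons eqxx !orbT.
apply: geo3 => //.
- by rewrite fc setICr.
- rewrite fc; apply/eqP; rewrite -subset0; apply/subsetP => z; rewrite !inE.
  by case/andP => /negP zv zu; case: zv; exact: (subsetP s).
- by rewrite fw setICr.
- by apply/set0Pn; exists x; rewrite fw !inE xv xu.
- rewrite fw; apply/setP => z; rewrite !inE; case: (boolP (z \in f u)) => /= zu; [by rewrite (subsetP s _ zu) | by rewrite orbT].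
Qed.

Lemma res_FF u v : u \in V -> v \in V -> f u \in FF -> f v \in FF -> u != v -> Res u v.
Proof.
move=> uV vV uF vF neq.
case: (eqVneq (f u :&: f v) set0) => hd.
  case: (eqVneq #|f v| 1) => cv; last exact: res_opt2.
  case: (eqVneq #|f u| 1) => cu.
    case: (boolP (tp \in f v)) => tv; last exact: res_opt1.
    apply: Res_sym; apply: res_opt1 => //; first by rewrite setIC.
    by apply/negP => tu; exact: (disj_mem hd tu tv).
  by apply: Res_sym; apply: res_opt2 => //; rewrite setIC.
case/orP: (FF2 uF vF hd) => s; first exact: res_opt3.
by apply: Res_sym; apply: res_opt3 => //; rewrite eq_sym.
Qed.

Lemma upper : strong_resolving_set V E WW.
Proof.
split; first exact: subsetDl.
move=> u v uV vV neq.
case: (boolP (u \in WW)) => uW; first by exists u => //; apply: res_trivial.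
case: (boolP (v \in WW)) => vW.
  by exists v => //; apply: resolves_sym; apply: res_trivial.
have uF : f u \in FF by move: uW; rewrite /WW in_setD uV andbT negbK /FL inE.
have vF : f v \in FF by move: vW; rewrite /WW in_setD vV andbT negbK /FL inE.
exact: res_FF.
Qed.

Lemma lower W : strong_resolving_set V E W -> 2 ^ n - 2 * n <= #|W|.
Proof.
case=> sW hW.
set M := f @: (V :\: W).
have lamM : lam M.
  move=> A B /imsetP[u] /[!in_setD] /andP[uW uV] -> /imsetP[v] /[!in_setD] /andP[vW vV] -> hI.
  apply/negPn/negP => /norP[h1 h2].
  have neq : u != v by apply/negP => /eqP e; rewrite e subxx in h1.
  have [w wW hr] := hW u v uV vV neq.
  case: hr => [[p [sp vp]]|[p [sp up]]].
    have e := no_geo uV vV neq hI h2 sp vp.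
    by rewrite -e wW in vW.
  have neq' : v != u by rewrite eq_sym.
  have hI' : f v :&: f u != set0 by rewrite setIC.
  have e := no_geo vV uV neq' hI' h1 sp up.
  by rewrite -e wW in uW.
set M' := setT |: M.
have lamM' : lam M'.
  move=> A B; rewrite !inE => /orP[/eqP ->|hA] /orP[/eqP ->|hB] hI.
  - by rewrite subxx.
  - by rewrite subsetT orbT.
  - by rewrite subsetT.
  - exact: lamM.
have hM' : forall A, A \in M' -> (A != set0) && (A \subset setT).
  move=> A; rewrite !inE subsetT andbT => /orP[/eqP ->|/imsetP[u]].
    by apply/negP => /eqP h; have := in_setT o0; rewrite h inE.
  by rewrite in_setD => /andP[_]; rewrite inV => /andP[h _] ->.
have := laminar_bound (erefl #|[set: 'I_n]|) hM' lamM'.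
have TM : setT \notin M.
  apply/negP => /imsetP[u]; rewrite in_setD => /andP[_]; rewrite inV => /andP[_ h] e.
  by rewrite e eqxx in h.
rewrite cardsU1 TM cardsT card_ord /M card_imset; last exact: finj.
rewrite cardsD (setIidPr sW) card_V.
have : #|W| <= #|V| by apply: subset_leq_card.
rewrite card_V.
have : 2 <= 2 ^ n by rewrite (leq_exp2l 1) //; lia.
lia.
Qed.

Lemma main_sec : is_sdim V E (2 ^ n - 2 * n).
Proof.
split; first by exists WW; split; [exact: upper | exact: card_WW].
exact: lower.
Qed.

End Main.

Theorem mainTheorem12 (n : nat) (d : Order.disp_t) (L : finTBLatticeType d)
  (f : L -> {set 'I_n}) :
  3 <= n ->
  bijective f ->
  (forall x y : L, (x <= y)%O = (f x \subset f y)) ->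
  is_sdim (zdg_vertices L) (zdg_adj L) (2 ^ n - 2 * n).
Proof.
move=> n3 fb fm; exact: (@main_sec n d L f n3 fb fm).
Qed.
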